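(* Fix parameters $\alpha\in[0,1)$, $\beta\ge 0$, $q>0$, a positive function $u(t)>0$ (the study-session intensity), a constant $d>0$ with $d\neq 1$, and arbitrary constants $c_1,c_2\in\mathbb{R}$. For state variables $m\in[0,1]$, $n>0$, $\Delta\ge 0$ and time $t$, set $$B_d(m)=c_2\frac{\log d}{-m^2+2m-d}-c_2\frac{\log d}{1-d}+c_1\, m\log\!\Big(\frac{1+\beta}{1-\alpha}\Big)-c_1\log(1+\beta),$$ $$g_d(m,n)=\sqrt{\tfrac{u(t)}{2}}\,\big[B_d(m)\big]_+,\qquad h_d(m,n,\Delta)=-\sqrt{q}\,\frac{m\,n}{1+\Delta}\,c_2\,\frac{(-2m+2)\log d}{(-m^2+2m-d)^2},$$ and define the loss $$\ell_d(m,n,\Delta,p)=h_d(m,n,\Delta)+g_d^2(m,n)+\tfrac12\, q\, p^2 u(t).$$ Let $$J_d(m,n,\Delta,t)=\sqrt{q}\Big(c_1\log n+c_2\frac{\log d}{-m^2+2m-d}\Big).$$ Then $\partial J_d/\partial t=0$, $\partial J_d/\partial \Delta=0$, $\partial J_d/\partial m=-\sqrt{q}\,c_2\frac{(-2m+2)\log d}{(-m^2+2m-d)^2}$, and at every point $(m,n,\Delta,t)$ with $m\in[0,1]$, $n>0$, $\Delta\ge0$ and $-m^2+2m-d\neq 0$, the function $J=J_d$ satisfies the Hamilton–Jacobi–Bellman equation $$0=J_t(m,n,\Delta,t)-\frac{n\,m}{1+\Delta}J_m(m,n,\Delta,t)+J_\Delta(m,n,\Delta,t)+\min_{p\ge 0}\Big\{\ell_d(m,n,\Delta,p)+\big[J(1,(1-\alpha)n,0,t)\,m+J(1,(1+\beta)n,0,t)\,(1-m)-J(m,n,\Delta,t)\big]\,p\,u(t)\Big\},$$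 and the minimizing (optimal) selection probability is $$p^*_d=q^{-1/2}\big[B_d(m)\big]_+ .$$
   Context: This arises from a stochastic optimal control model of a learner reviewing one question: $m$ is the probability of recalling the answer, $n$ is the forgetting rate, $\Delta$ is the time since the last review, $p$ is the probability that the question is selected in a study session, and $u(t)$ is the (given, uncontrolled) rate of study sessions. At a review, the state jumps to $m=1$, $\Delta=0$, and $n\mapsto(1-\alpha)n$ on a successful recall (probability $m$) or $n\mapsto(1+\beta)n$ on an unsuccessful recall (probability $1-m$); between reviews $dm=-\frac{nm}{1+\Delta}dt$ and $d\Delta=dt$. Notation: $[x]_+=\max(x,0)$; $J_t,J_m,J_\Delta$ denote partial derivatives of $J$ with respect to $t,m,\Delta$. *)

(* Defs.v *)
From Stdlib Require Import Reals.
From Coquelicot Require Import Coquelicot.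
Open Scope R_scope.

Definition pos_part (x : R) : R := Rmax x 0.

Definition Bd (alpha beta d c1 c2 m : R) : R :=
  c2 * ln d / (- m ^ 2 + 2 * m - d) - c2 * ln d / (1 - d)
  + c1 * m * ln ((1 + beta) / (1 - alpha)) - c1 * ln (1 + beta).

Definition gd (alpha beta d c1 c2 : R) (u : R -> R) (m n t : R) : R :=
  sqrt (u t / 2) * pos_part (Bd alpha beta d c1 c2 m).

Definition hd (q d c2 m n Delta : R) : R :=
  - sqrt q * (m * n / (1 + Delta)) * c2 *
    ((- 2 * m + 2) * ln d / (- m ^ 2 + 2 * m - d) ^ 2).

Definition elld (alpha beta q d c1 c2 : R) (u : R -> R) (m n Delta p t : R) : R :=
  hd q d c2 m n Delta + (gd alpha beta d c1 c2 u m n t) ^ 2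
  + / 2 * q * p ^ 2 * u t.

Definition Jd (q d c1 c2 : R) (m n Delta t : R) : R :=
  sqrt q * (c1 * ln n + c2 * ln d / (- m ^ 2 + 2 * m - d)).

(* the expression minimized over p >= 0 in the HJB equation *)
Definition hjb_obj (alpha beta q d c1 c2 : R) (u : R -> R) (m n Delta t p : R) : R :=
  elld alpha beta q d c1 c2 u m n Delta p t
  + (Jd q d c1 c2 1 ((1 - alpha) * n) 0 t * m
     + Jd q d c1 c2 1 ((1 + beta) * n) 0 t * (1 - m)
     - Jd q d c1 c2 m n Delta t) * p * u t.

(* Main.v *)
Require Import Defs.
From Stdlib Require Import Reals Lra.
From Coquelicot Require Import Coquelicot.
Open Scope R_scope.

Lemma Jt_der q d c1 c2 m n Delta t :
  is_derive (fun t' => Jd q d c1 c2 m n Delta t') t 0.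
Proof. unfold Jd. auto_derive; [exact I | ring]. Qed.

Lemma JD_der q d c1 c2 m n Delta t :
  is_derive (fun D' => Jd q d c1 c2 m n D' t) Delta 0.
Proof. unfold Jd. auto_derive; [exact I | ring]. Qed.

Lemma Jm_der q d c1 c2 m n Delta t : - m ^ 2 + 2 * m - d <> 0 ->
  is_derive (fun m' => Jd q d c1 c2 m' n Delta t) m
       (- sqrt q * c2 * ((- 2 * m + 2) * ln d / (- m ^ 2 + 2 * m - d) ^ 2)).
Proof.
  intros HD. unfold Jd. auto_derive.
  - exact HD.
  - field. exact HD.
Qed.

Lemma bracket alpha beta q d c1 c2 m n Delta t :
  0 <= alpha < 1 -> 0 <= beta -> 0 < n -> d <> 1 ->
  Jd q d c1 c2 1 ((1 - alpha) * n) 0 t * m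
     + Jd q d c1 c2 1 ((1 + beta) * n) 0 t * (1 - m)
     - Jd q d c1 c2 m n Delta t
  = - sqrt q * Bd alpha beta d c1 c2 m.
Proof.
  intros Ha Hb Hn Hd1. unfold Jd, Bd.
  rewrite !ln_mult by lra.
  rewrite ln_div by lra.

  replace (- 1 ^ 2 + 2 * 1 - d) with (1 - d) by ring.
  ring.
Qed.

Lemma F_form alpha beta q d c1 c2 u m n Delta t p :
  0 <= alpha < 1 -> 0 <= beta -> 0 < q -> 0 < u t -> 0 < n -> d <> 1 ->
  hjb_obj alpha beta q d c1 c2 u m n Delta t p =
  hd q d c2 m n Delta + u t / 2 *
   ((sqrt q * p - Bd alpha beta d c1 c2 m) ^ 2 - (Bd alpha beta d c1 c2 m) ^ 2
    + (pos_part (Bd alpha beta d c1 c2 m)) ^ 2).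
Proof.
  intros Ha Hb Hq Hu Hn Hd1. unfold hjb_obj, elld, gd.
  rewrite bracket by assumption.
  set (B := Bd alpha beta d c1 c2 m).
  set (P := pos_part B).
  assert (Hs : sqrt q * sqrt q = q) by (apply sqrt_sqrt; lra).
  assert (Hs2 : sqrt (u t / 2) * sqrt (u t / 2) = u t / 2) by (apply sqrt_sqrt; lra).
  replace ((sqrt (u t / 2) * P) ^ 2) with ((sqrt (u t / 2) * sqrt (u t / 2)) * P ^ 2) by ring.
  rewrite Hs2. replace (/ 2 * q * p ^ 2 * u t) with (/ 2 * (sqrt q * sqrt q) * p ^ 2 * u t) by (rewrite Hs; ring). clearbody P B. generalize (hd q d c2 m n Delta) (u t) (sqrt q); intros. field.
Qed.

Theorem lemma2 (alpha beta q d c1 c2 : R) (u : R -> R)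
  (Halpha : 0 <= alpha < 1) (Hbeta : 0 <= beta) (Hq : 0 < q)
  (Hu : forall t, 0 < u t) (Hd : 0 < d) (Hd1 : d <> 1) :
  (* J_t = 0 *)
  (forall m n Delta t,
     is_derive (fun t' => Jd q d c1 c2 m n Delta t') t 0) /\
  (* J_Delta = 0 *)
  (forall m n Delta t,
     is_derive (fun D' => Jd q d c1 c2 m n D' t) Delta 0) /\
  (* J_m *)
  (forall m n Delta t, - m ^ 2 + 2 * m - d <> 0 ->
     is_derive (fun m' => Jd q d c1 c2 m' n Delta t) m
       (- sqrt q * c2 * ((- 2 * m + 2) * ln d / (- m ^ 2 + 2 * m - d) ^ 2))) /\
  (* HJB equation, with minimum over p >= 0 attained (uniquely) at p* *)
  (forall m n Delta t,
     0 <= m <= 1 -> 0 < n -> 0 <= Delta -> - m ^ 2 + 2 * m - d <> 0 ->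
     let pstar := / sqrt q * pos_part (Bd alpha beta d c1 c2 m) in
     let F := hjb_obj alpha beta q d c1 c2 u m n Delta t in
     0 <= pstar /\
     (forall p, 0 <= p -> F pstar <= F p) /\
     (forall p, 0 <= p -> F p = F pstar -> p = pstar) /\
     0 = Derive (fun t' => Jd q d c1 c2 m n Delta t') t
         - n * m / (1 + Delta) * Derive (fun m' => Jd q d c1 c2 m' n Delta t) m
         + Derive (fun D' => Jd q d c1 c2 m n D' t) Delta
         + F pstar).
Proof.
  split; [intros; apply Jt_der|].
  split; [intros; apply JD_der|].
  split; [intros; apply Jm_der; assumption|].
  intros m n Delta t Hm Hn HD HDd pstar F.
  assert (Hsq : 0 < sqrt q) by (apply sqrt_lt_R0; lra).
  assert (Hut := Hu t).
  assert (HF : forall p, F p = hd q d c2 m n Delta + u t / 2 *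
   ((sqrt q * p - Bd alpha beta d c1 c2 m) ^ 2 - (Bd alpha beta d c1 c2 m) ^ 2
    + (pos_part (Bd alpha beta d c1 c2 m)) ^ 2))
    by (intro p; unfold F; apply F_form; auto).
  set (B := Bd alpha beta d c1 c2 m) in *.
  assert (Hps : sqrt q * pstar = pos_part B)
    by (unfold pstar; field; lra).
  assert (HFs : F pstar = hd q d c2 m n Delta).
  { rewrite HF, Hps. unfold pos_part, Rmax.
    destruct (Rle_dec B 0); [|ring].
    destruct (Req_dec B 0) as [->|]; [ring|]. 
    replace ((0 - B) ^ 2 - B ^ 2 + 0 ^ 2) with 0 by ring. ring. }
  split; [|split; [|split]].
  - unfold pstar. apply Rmult_le_pos.
    + left; apply Rinv_0_lt_compat; lra.
    + unfold pos_part; apply Rmax_r.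
  - intros p Hp. rewrite HFs, HF.
    assert (0 <= (sqrt q * p - B) ^ 2 - B ^ 2 + pos_part B ^ 2).
    { unfold pos_part, Rmax. destruct (Rle_dec B 0).
      - assert (0 <= sqrt q * p) by (apply Rmult_le_pos; lra).
        generalize dependent (sqrt q * p); intros x Hx.
        replace ((x - B) ^ 2 - B ^ 2 + 0 ^ 2) with (x * x + 2 * (x * (- B))) by ring.
        assert (0 <= x * (- B)) by (apply Rmult_le_pos; lra).
        assert (0 <= x * x) by (apply Rmult_le_pos; lra). lra.
      - replace ((sqrt q * p - B) ^ 2 - B ^ 2 + B ^ 2) with ((sqrt q * p - B) ^ 2) by ring.
        apply pow2_ge_0. }
    assert (0 <= u t / 2 * ((sqrt q * p - B) ^ 2 - B ^ 2 + pos_part B ^ 2))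
      by (apply Rmult_le_pos; lra).
    lra.
  - intros p Hp Heq. rewrite HFs, HF in Heq.
    assert (E : (sqrt q * p - B) ^ 2 - B ^ 2 + pos_part B ^ 2 = 0).
    { assert (u t / 2 * ((sqrt q * p - B) ^ 2 - B ^ 2 + pos_part B ^ 2) = 0) by lra.
      apply Rmult_integral in H. destruct H; [lra|assumption]. }
    apply (Rmult_eq_reg_l (sqrt q)); [|lra]. rewrite Hps.
    unfold pos_part, Rmax in *. destruct (Rle_dec B 0).
    + assert (0 <= sqrt q * p) by (apply Rmult_le_pos; lra).
        generalize dependent (sqrt q * p); intros x Heq0 E Hx.
        replace ((x - B) ^ 2 - B ^ 2 + 0 ^ 2) with (x * x + 2 * (x * (- B))) in E by ring.
        assert (0 <= x * (- B)) by (apply Rmult_le_pos; lra).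
        assert (0 <= x * x) by (apply Rmult_le_pos; lra).
        assert (Hxx : x * x = 0) by lra. destruct (Rmult_integral _ _ Hxx); lra.
    + replace ((sqrt q * p - B) ^ 2 - B ^ 2 + B ^ 2) with ((sqrt q * p - B) ^ 2) in E by ring.
      assert (Hz : (sqrt q * p - B) * (sqrt q * p - B) = 0) by (rewrite <- E; ring). destruct (Rmult_integral _ _ Hz); lra.
  - replace (Derive (fun t' => Jd q d c1 c2 m n Delta t') t) with 0
      by (symmetry; apply is_derive_unique; apply Jt_der).
    replace (Derive (fun D' => Jd q d c1 c2 m n D' t) Delta) with 0
      by (symmetry; apply is_derive_unique; apply JD_der).
    replace (Derive (fun m' => Jd q d c1 c2 m' n Delta t) m) with
      (- sqrt q * c2 * ((- 2 * m + 2) * ln d / (- m ^ 2 + 2 * m - d) ^ 2))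
      by (symmetry; apply is_derive_unique; apply Jm_der; exact HDd).
    rewrite HFs. unfold hd. field. split; [assumption|lra].
Qed.
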